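(* For every index coding instance $\mathcal{I}=\{(i\mid A_i):i\in[m]\}$, $\beta_{\text{FP-UMCD}}(\mathcal{I})\le\beta_{\text{FPCC}}(\mathcal{I})$.
   Context: For $M\subseteq[m]$, the subinstance $M$ has receivers $M$ and side information $A_i\cap M$; $\beta_{\text{MDS}}(M)=|M|-\min_{i\in M}|M\cap A_i|$. $\beta_{\text{FPCC}}(\mathcal{I})=\min\sum_j\gamma_j\beta_{\text{MDS}}(M_j)$ and $\beta_{\text{FP-UMCD}}(\mathcal{I})=\min\sum_j\gamma_j\beta_{\text{UMCD}}(M_j)$, both minima over finite families of (possibly overlapping) subsets $M_1,\dots,M_n\subseteq[m]$ and weights $\gamma_j\in[0,1]$ with $\sum_{j:\,i\in M_j}\gamma_j\ge1$ for all $i\in[m]$. UMCD algorithm on a (sub)instance with receiver set $V$: $B_i=V\setminus(A_i\cup\{i\})$ (within $V$); $\boldsymbol{G}_{[k]}^L$ is the submatrix of the first $k$ rows and columns $L$ of a $0/1$ matrix, $\mathrm{mcm}$ the maximum number of $1$-entries in distinct rows and columns (0 if no columns); $N=V$, $k=0$; while $N\ne\emptyset$: $k\leftarrow k+1$; pick $w\in N$ minimizing $|A_w|$ (arbitrary tie-breaking); row $k$ is the indicator of $\{w\}\cup A_w$; remove $w$; remove every $i\in N$ with $\mathrm{mcm}(\boldsymbol{G}_{[k]}^{\{i\}\cup B_i})=\mathrm{mcm}(\boldsymbol{G}_{[k]}^{B_i})+1$; output $\beta_{\text{UMCD}}=k$ (a fixed execution for each subinstance). *)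

(* Defs.v *)
From HB Require Import structures.
From mathcomp Require Import all_boot all_order all_algebra.
From mathcomp Require Import classical_sets reals.
Set Implicit Arguments. Unset Strict Implicit. Unset Printing Implicit Defensive.
Import Order.TTheory GRing.Theory Num.Theory.

Section IndexCoding.
Local Unset Implicit Arguments.
Variable m : nat.
(* A i : side information of receiver i (receiver i wants message i). *)
Variable A : 'I_m -> {set 'I_m}.

(* beta_MDS of the subinstance M: |M| - min_{i in M} |M cap A_i|
   (equal to 0 for M empty). *)
Definition beta_MDS (M : {set 'I_m}) : nat :=
  #|M| - \big[minn/#|M|]_(i in M) #|M :&: A i|.

(* A 0/1 matrix with k rows and columns indexed by 'I_m is given by the seq of
   its rows, row r being the set of columns where the entry is 1.
   A matching in G_[k]^L: a set of (row, column) pairs with entry 1, column in L,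
   using pairwise distinct rows and pairwise distinct columns. *)
Definition is_matching (rows : seq {set 'I_m}) (L : {set 'I_m})
    (P : {set 'I_(size rows) * 'I_m}) : bool :=
  [forall p in P, (p.2 \in L) && (p.2 \in nth finset.set0 rows p.1)] &&
  [forall p in P, forall q in P,
     ((p.1 == q.1) || (p.2 == q.2)) ==> (p == q)].

Definition mcm (rows : seq {set 'I_m}) (L : {set 'I_m}) : nat :=
  \big[maxn/0%N]_(P : {set 'I_(size rows) * 'I_m} | is_matching rows L P) #|P|.

(* UMCD on the subinstance with receiver set V (side information A i :&: V).
   [umcd_run V N rows k]: from the state with remaining set N and matrix rows
   [rows] (built so far), some execution (some tie-breaking) outputs k. *)
Inductive umcd_run (V : {set 'I_m}) : {set 'I_m} -> seq {set 'I_m} -> nat -> Prop :=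
| umcd_done rows : umcd_run V finset.set0 rows (size rows)
| umcd_step (N : {set 'I_m}) (rows : seq {set 'I_m}) (w : 'I_m) (k : nat) :
    w \in N ->
    (forall u, u \in N -> #|A w :&: V| <= #|A u :&: V|) ->
    umcd_run V
      [set i in N :\ w |
         mcm (rcons rows (w |: (A w :&: V))) ([set i] :|: (V :\: (A i :|: [set i])))
         != (mcm (rcons rows (w |: (A w :&: V))) (V :\: (A i :|: [set i]))).+1]
      (rcons rows (w |: (A w :&: V))) k ->
    umcd_run V N rows k.

Definition umcd_output (V : {set 'I_m}) (k : nat) : Prop := umcd_run V V [::] k.

Definition beta_FP (R : realType) (beta : {set 'I_m} -> nat) : R :=
  inf [set x : R | exists (n : nat) (Ms : 'I_n -> {set 'I_m}) (g : 'I_n -> R),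
        [/\ (forall j, 0 <= g j <= 1)%R,
            (forall i : 'I_m, (1 <= \sum_(j < n | i \in Ms j) g j)%R) &
            x = (\sum_(j < n) g j * (beta (Ms j))%:R)%R]].

End IndexCoding.

(* Main.v *)
Require Import Defs.
From HB Require Import structures.
From mathcomp Require Import all_boot all_order all_algebra.
From mathcomp Require Import zify.

Module Aux.
Set Implicit Arguments. Unset Strict Implicit. Unset Printing Implicit Defensive.
Local Open Scope nat_scope.

Section Hall.
Variables (I J : finType) (j0 : J).

Lemma bigcupDs (W : {set I}) (E : I -> {set J}) (C : {set J}) :
  \bigcup_(i in W) (E i :\: C) = (\bigcup_(i in W) E i) :\: C.
Proof.
apply/setP => x; rewrite !inE; apply/bigcupP/andP.
  by case=> i iW; rewrite !inE => /andP[xc xE]; split=> //; apply/bigcupP; exists i.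
by case=> xc /bigcupP[i iW xE]; exists i => //; rewrite !inE xc.
Qed.

Lemma hall n : forall (S : {set I}) (E : I -> {set J}), #|S| <= n ->
  (forall U : {set I}, U \subset S -> #|U| <= #|\bigcup_(i in U) E i|) ->
  exists g : I -> J, (forall i, i \in S -> g i \in E i) /\ {in S &, injective g}.
Proof.
elim: n => [|n IH] S E hS hH.
  exists (fun _ => j0); move: hS; rewrite leqn0 cards_eq0 => /eqP ->.
  by split=> [i|i i']; rewrite inE.
case: (boolP [exists U : {set I}, [&& U \subset S, U != set0, U != S &
             #|\bigcup_(i in U) E i| <= #|U|]]).
  case/existsP=> U /and4P[sUS U0 US tight].
  have ltU : #|U| < #|S| by rewrite proper_card // properEneq US.
  have U0' : 0 < #|U| by rewrite card_gt0.
  have [g1 [g1E g1i]] : exists g : I -> J, (forall i, i \in U -> g i \in E i) /\ {in U &, injective g}.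
    apply: IH; first by lia.
    by move=> W sWU; apply: hH; apply: subset_trans sWU sUS.
  set NU := \bigcup_(i in U) E i.
  have tight2 : #|NU| <= #|U| := tight.
  have [g2 [g2E g2i]] : exists g : I -> J, (forall i, i \in S :\: U -> g i \in E i :\: NU) /\ {in S :\: U &, injective g}.
    apply: IH.
      have := cardsD S U; rewrite (setIidPr sUS); lia.
    move=> W sW.
    have disWU : W :&: U = set0.
      apply/setP=> x; rewrite !inE; apply/negbTE; apply/andP=> -[/(subsetP sW)].
      by rewrite inE => /andP[/negP].
    rewrite bigcupDs.
    have sub1 : \bigcup_(i in W :|: U) E i \subset (\bigcup_(i in W) E i) :|: NU.
      apply/subsetP=> x /bigcupP[i]; rewrite inE => /orP[iW|iU] xE; rewrite inE.
        by apply/orP; left; apply/bigcupP; exists i.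
      by apply/orP; right; apply/bigcupP; exists i.
    have h2 : W :|: U \subset S.
      rewrite subUset sUS andbT; apply: subset_trans sW _; exact: subsetDl.
    have h3 := hH _ h2.
    have h3' := cardsUI W U; rewrite disWU cards0 addn0 in h3'.
    have h4 := subset_leq_card sub1.
    have h5 := cardsUI (\bigcup_(i in W) E i :\: NU) NU.
    have h6 : (\bigcup_(i in W) E i :\: NU) :|: NU = (\bigcup_(i in W) E i) :|: NU.
      by rewrite setDE setUIl (setUC (~: NU)) setUCr setIT.
    rewrite h6 in h5.
    have h7 : (\bigcup_(i in W) E i :\: NU) :&: NU = set0 by apply/setP=> x; rewrite !inE; case: (x \in NU); rewrite ?andbF.
    rewrite h7 cards0 addn0 in h5; lia.
  exists (fun i => if i \in U then g1 i else g2 i); split.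
    move=> i iS; case: ifP => iU; first exact: g1E.
    by have := g2E i; rewrite !inE iU iS /= => /(_ isT) /andP[].
  move=> i i' iS i'S /=; case: ifP => iU; case: ifP => i'U.
  - exact: g1i.
  - move=> e; have := g2E i'; rewrite !inE i'U i'S => /(_ isT) /andP[/negP]; case.
    by rewrite -e; apply/bigcupP; exists i => //; apply: g1E.
  - move=> e; have := g2E i; rewrite !inE iU iS => /(_ isT) /andP[/negP]; case.
    by rewrite e; apply/bigcupP; exists i' => //; apply: g1E.
  - by apply: g2i; rewrite inE ?iU ?i'U.
rewrite negb_exists => /forallP noT.
case: (set_0Vmem S) => [-> | [i0 i0S]].
  by exists (fun _ => j0); split=> [i|i i']; rewrite inE.
have : 0 < #|E i0|.
  have := hH [set i0]; rewrite sub1set i0S cards1 => /(_ isT).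
  by rewrite big_set1.
rewrite card_gt0 => /set0Pn[c cE].
have [g2 [g2E g2i]] : exists g : I -> J, (forall i, i \in S :\ i0 -> g i \in E i :\ c) /\ {in S :\ i0 &, injective g}.
  apply: IH.
    have := cardsD1 i0 S; rewrite i0S; lia.
  move=> W sW; case: (set_0Vmem W) => [->|[x xW]]; first by rewrite cards0.
  have := noT W; rewrite (subset_trans sW (subsetDl _ _)) /=.
  have -> : (W != set0) by apply/set0Pn; exists x.
  have -> /= : W != S.
    apply/eqP=> eWS; move: (subsetP sW i0); rewrite !inE eqxx eWS i0S /=; by move=> /(_ isT).
  rewrite -ltnNge => lt.
  rewrite bigcupDs; have := cardsD1 c (\bigcup_(i in W) E i).
  rewrite setDE -setDE; lia.
exists (fun i => if i == i0 then c else g2 i); split.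
  move=> i iS; case: eqP => [->//|/eqP ne].
  by have := g2E i; rewrite !inE ne iS => /(_ isT) /andP[].
move=> i i' iS i'S /=; case: eqP => [->|/eqP ne]; case: eqP => [->|/eqP ne'] //.
- move=> e; have := g2E i'; rewrite !inE ne' i'S => /(_ isT); by rewrite -e eqxx.
- move=> e; have := g2E i; rewrite !inE ne iS => /(_ isT); by rewrite e eqxx.
- by apply: g2i; rewrite !inE ?ne ?ne' ?iS ?i'S.
Qed.
End Hall.

Lemma bigmin_le (T : eqType) (r : seq T) (P : pred T) (F : T -> nat) i0 c :
  i0 \in r -> P i0 -> \big[minn/c]_(j <- r | P j) F j <= F i0.
Proof.
move=> + Pi; elim: r => // x r IH; rewrite inE big_cons => /orP[/eqP<-|ir].
  by rewrite Pi geq_minl.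
by case: ifP => _; [rewrite geq_min IH ?orbT | exact: IH].
Qed.

Lemma arith1 t1 dd nb ntc nt c t0 u : t1 + dd <= nb -> nb <= ntc -> ntc = nt - c ->
  nt <= t0 + dd -> t1 = t0 - u -> u <= t0 -> c <= nt -> c <= u.
Proof. lia. Qed.

Section Core.
Variables (m : nat) (A : 'I_m -> {set 'I_m}).
Hypothesis hA : forall i, i \notin A i.
Variable V : {set 'I_m}.

Definition dd := \big[minn/#|V|]_(i in V) #|V :&: A i|.
Definition Bs i := V :\: (A i :|: [set i]).
Definition Ls i := [set i] :|: Bs i.
Definition rowof w := w |: (A w :&: V).
Definition NB (rows : seq {set 'I_m}) n (T : {set 'I_n}) := \bigcup_(j in T) nth set0 rows j.
Definition Hprop rows := forall n (T : {set 'I_n}), n = size rows -> T != set0 ->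
  #|T| + dd <= #|NB rows T|.

Definition rowsV (rows : seq {set 'I_m}) := all (fun r : {set 'I_m} => r \subset V) rows.

Lemma d_le i : i \in V -> dd <= #|A i :&: V|.
Proof. by move=> iV; rewrite setIC; apply: bigmin_le => //; exact: mem_index_enum. Qed.

Lemma card_rowof w : #|rowof w| = #|A w :&: V|.+1.
Proof. by rewrite /rowof cardsU1 inE (negbTE (hA w)). Qed.

Lemma matching_elim rows (L : {set 'I_m}) (P : {set 'I_(size rows) * 'I_m}) : is_matching m rows L P ->
  (forall p, p \in P -> p.2 \in L /\ p.2 \in nth set0 rows p.1) /\
  (forall p q, p \in P -> q \in P -> (p.1 = q.1 \/ p.2 = q.2) -> p = q).
Proof.
case/andP=> /forallP h1 /forallP h2; split.
  by move=> p pP; have := h1 p; rewrite pP /= => /andP.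
move=> p q pP qP e; have := h2 p; rewrite pP /= => /forallP /(_ q); rewrite qP /=.
by move/implyP => h; apply/eqP/h; case: e => ->; rewrite eqxx ?orbT.
Qed.

Lemma matching_intro rows (L : {set 'I_m}) (P : {set 'I_(size rows) * 'I_m}) :
  (forall p, p \in P -> p.2 \in L /\ p.2 \in nth set0 rows p.1) ->
  (forall p q, p \in P -> q \in P -> (p.1 = q.1 \/ p.2 = q.2) -> p = q) ->
  is_matching m rows L P.
Proof.
move=> h1 h2; apply/andP; split; apply/forallP => p; apply/implyP => pP.
  by case: (h1 p pP) => -> ->.
apply/forallP => q; apply/implyP => qP; apply/implyP => /orP e.
by apply/eqP; apply: h2 => //; case: e => /eqP; [left|right].
Qed.

Lemma mcm_ge rows (L : {set 'I_m}) (P : {set 'I_(size rows) * 'I_m}) : is_matching m rows L P -> #|P| <= mcm m rows L.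
Proof. by move=> hP; rewrite /mcm; apply: (leq_bigmax_cond P hP). Qed.

Lemma mcm_ex rows (L : {set 'I_m}) : exists2 P, is_matching m rows L P & #|P| = mcm m rows L.
Proof.
have h0 : is_matching m rows L set0 by apply: matching_intro => p; rewrite inE.
rewrite /mcm (bigmax_eq_arg _ h0).
case: arg_maxnP => // P hP _; by exists P.
Qed.

Lemma mcm_S rows (L : {set 'I_m}) i : mcm m rows ([set i] :|: L) <= (mcm m rows L).+1.
Proof.
apply/bigmax_leqP => P /matching_elim [h1 h2].
set S := [set p : 'I_(size rows) * 'I_m | p.2 != i].
have hk : is_matching m rows L (P :&: S).
  apply: matching_intro.
    move=> p; rewrite !inE => /andP[pP ne]; case: (h1 p pP); rewrite !inE (negbTE ne) /=.
    by move=> -> ->.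
  by move=> p q; rewrite !inE => /andP[pP _] /andP[qP _]; apply: h2.
have := cardsID S P.
have : #|P :\: S| <= 1.
  case: (set_0Vmem (P :\: S)) => [->|[p0 p0P]]; first by rewrite cards0.
  rewrite -(cards1 p0); apply: subset_leq_card; apply/subsetP => q qP; rewrite inE.
  move: p0P qP; rewrite !inE !negbK => /andP[/eqP e0 p0P] /andP[/eqP e1 qP].
  by apply/eqP; apply: h2 => //; right; rewrite e0 e1.
move=> h3 h4; have h5 := mcm_ge hk; rewrite -h4 -addn1; exact: leq_add h5 h3.
Qed.

Lemma nth_sub (rows : seq {set 'I_m}) (j : nat) : rowsV rows -> nth set0 rows j \subset V.
Proof.
move=> /allP h; case: (ltnP j (size rows)) => hj.
  by apply: h; apply: mem_nth.
by rewrite nth_default ?sub0set.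
Qed.


Lemma key rows w (T0 : {set 'I_(size rows)}) :
  rowsV rows -> Hprop rows -> w \in V ->
  #|NB rows T0| <= #|T0| + dd -> rowof w \subset NB rows T0 ->
  mcm m rows (Ls w) = (mcm m rows (Bs w)).+1.
Proof.
move=> hV hH wV hle hsub.
set NT := NB rows T0 in hle hsub *.
set Q := NT :\: A w.
have wNT : w \in NT by apply: (subsetP hsub); rewrite !inE eqxx.
have wQ : w \in Q by rewrite inE wNT (hA w).
have [j0 j0T] : exists j0, j0 \in T0.
  by move: wNT => /bigcupP [j jT _]; exists j.
have QL : Q \subset Ls w.
  apply/subsetP => x; rewrite inE => /andP[xA /bigcupP[j jT xj]].
  have xV : x \in V by apply: (subsetP (nth_sub j hV)).
  rewrite !inE; case: eqP => //= ne; rewrite (negbTE xA) xV /=.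
  by apply/eqP.
have cardQ : #|Q| + dd <= #|NT|.
  have h1 : A w :&: V \subset NT :&: A w.
    rewrite subsetI subsetIl andbT; apply: subset_trans hsub.
    by apply/subsetP => x xA; apply: setU1r.
  have h2 := subset_leq_card h1.
  have h3 := d_le wV.
  have h4 := cardsD NT (A w).
  have h5 : #|NT :&: A w| <= #|NT| by apply: subset_leq_card; apply: subsetIl.
  rewrite /Q; lia.
pose E := fun c : 'I_m => [set j in T0 | c \in nth set0 rows j].
have [g [gE ginj]] : exists g : 'I_m -> 'I_(size rows),
    (forall c, c \in Q -> g c \in E c) /\ {in Q &, injective g}.
  apply: (hall j0 (leqnn _)) => C sCQ.
  set U := \bigcup_(c in C) E c.
  have sUT : U \subset T0.
    by apply/subsetP => j /bigcupP [c _]; rewrite inE => /andP[].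
  have hU := cardsD T0 U; rewrite (setIidPr sUT) in hU.
  have hUle : #|U| <= #|T0| by apply: subset_leq_card.
  have sCNT : C \subset NT by apply: subset_trans sCQ (subsetDl _ _).
  have hC := cardsD NT C; rewrite (setIidPr sCNT) in hC.
  have hCle : #|C| <= #|NT| by apply: subset_leq_card.
  have hCQ : #|C| <= #|Q| by apply: subset_leq_card.
  case: (set_0Vmem (T0 :\: U)) => [e0 | [j1 j1T]].
    rewrite e0 cards0 in hU; lia.
  have hne : T0 :\: U != set0 by apply/set0Pn; exists j1.
  have hT1 := hH _ (T0 :\: U) erefl hne.
  have sub : NB rows (T0 :\: U) \subset NT :\: C.
    apply/subsetP => x /bigcupP [j]; rewrite inE => /andP[jU jT] xj.
    rewrite inE; apply/andP; split; last by apply/bigcupP; exists j.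
    apply/negP => xC; move/negP: jU; apply; apply/bigcupP; exists x => //.
    by rewrite inE jT.
  have hsub2 := subset_leq_card sub.
  exact: (arith1 hT1 hsub2 hC hle hU hUle hCle).
have [PB hPB ePB] := mcm_ex rows (Bs w).
have [hB1 hB2] := matching_elim hPB.
have PBQ : forall p, p \in PB -> p.1 \in T0 -> p.2 \in Q.
  move=> p pP pT; case: (hB1 p pP) => pB pn.
  rewrite inE; apply/andP; split; last by apply/bigcupP; exists p.1.
  by move: pB; rewrite !inE negb_or => /andP[/andP[]].
set Pk := PB :&: [set p : 'I_(size rows) * 'I_m | p.2 \notin Q].
set PQ := [set (g c, c) | c in Q].
have hPQ : forall p, p \in PQ -> p.1 \in T0 /\ p.2 \in Q /\ p.2 \in nth set0 rows p.1.
  move=> p /imsetP [c cQ ->] /=; have := gE c cQ; rewrite inE => /andP[-> ->].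
  by [].
have hM : is_matching m rows (Ls w) (Pk :|: PQ).
  apply: matching_intro.
    move=> p; rewrite inE => /orP[|pQ].
      rewrite !inE => /andP[pP _]; case: (hB1 p pP) => pB ->; split=> //.
      by move: pB; rewrite /Bs !inE => ->; rewrite orbT.
    by case: (hPQ p pQ) => _ [pQ' ->]; split=> //; apply: (subsetP QL).
  have cross : forall p q, p \in Pk -> q \in PQ -> (p.1 = q.1 \/ p.2 = q.2) -> False.
    move=> p q /setIP [pP]; rewrite in_set => pnQ qQ; case: (hPQ q qQ) => qT [qQ' _].
    case=> e.
      by move/negP: pnQ; apply; apply: PBQ => //; rewrite e.
    by move/negP: pnQ; apply; rewrite e.
  move=> p q /setUP[pk|pq] /setUP[qk|qq] e.
  - by move: pk qk => /setIP[pP _] /setIP[qP _]; apply: hB2.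
  - by case: (cross p q pk qq e).
  - by case: (cross q p qk pq); case: e => e; [left|right].
  - move: pq qq e => /imsetP [c cQ ->] /imsetP [c' cQ' ->] /=.
    by case=> e; [rewrite (ginj _ _ cQ cQ' e) | rewrite e].
have disj : Pk :&: PQ = set0.
  apply/setP => p; rewrite in_set0; apply/negbTE/negP => /setIP [/setIP [_]]; rewrite in_set => pn pq.
  by case: (hPQ p pq) => _ [pQ _]; rewrite pQ in pn.
have cU := cardsU Pk PQ; rewrite disj cards0 subn0 in cU.
have cPQ : #|PQ| = #|Q|.
  by apply: card_in_imset => c c' _ _ [].
have cPB := cardsID [set p : 'I_(size rows) * 'I_m | p.2 \notin Q] PB.
have cdrop : #|PB :\: [set p : 'I_(size rows) * 'I_m | p.2 \notin Q]| <= #|Q :\ w|.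
  rewrite -(@card_in_imset _ _ snd).
    apply: subset_leq_card; apply/subsetP => x /imsetP [p]; rewrite !inE negbK.
    move=> /andP [pQ pP] ->; rewrite pQ andbT.
    by case: (hB1 p pP); rewrite !inE negb_or => /andP[/andP[_ ]].
  move=> p q; rewrite !inE => /andP[_ pP] /andP[_ qP] e.
  by apply: hB2 => //; right.
have cQw := cardsD1 w Q; rewrite wQ in cQw.
have := mcm_ge hM; have := mcm_S rows (Bs w) w.
rewrite -/(Ls w) => h1 h2.
apply/eqP; rewrite eqn_leq h1 /=.
rewrite -ePB; apply: leq_trans h2.
rewrite cU cPQ.
change (#|PB| < #|Pk| + #|Q|).
by rewrite -cPB ltn_add2l cQw add1n ltnS.
Qed.


Lemma NB_rcons (rows : seq {set 'I_m}) (r : {set 'I_m}) (T : {set 'I_(size rows).+1}) :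
  NB (rcons rows r) T =
  NB rows [set j : 'I_(size rows) | widen_ord (leqnSn _) j \in T] :|:
  (if ord_max \in T then r else set0).
Proof.
rewrite /NB big_mkcond big_ord_recr /= [in RHS]big_mkcond /=; congr (_ :|: _).
  apply: eq_bigr => j _; rewrite inE; case: ifP => // _.
  by rewrite nth_rcons ltn_ord.
by case: ifP => // _; rewrite nth_rcons ltnn eqxx.
Qed.

Lemma card_rcons n (T : {set 'I_n.+1}) :
  #|T| = #|[set j : 'I_n | widen_ord (leqnSn _) j \in T]| + (ord_max \in T).
Proof.
rewrite -!sum1_card big_mkcond big_ord_recr /= [in RHS]big_mkcond /=; congr (_ + _).
  by apply: eq_bigr => j _; rewrite inE.
Qed.

Lemma Hstep (rows : seq {set 'I_m}) (r : {set 'I_m}) : Hprop rows -> dd < #|r| ->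
  (forall T0 : {set 'I_(size rows)}, #|NB rows T0| <= #|T0| + dd -> ~~ (r \subset NB rows T0)) ->
  Hprop (rcons rows r).
Proof.
move=> hH hr hno n T hn; rewrite size_rcons in hn; subst n => Tn.
rewrite NB_rcons card_rcons.
set T0 := [set j : 'I_(size rows) | widen_ord (leqnSn _) j \in T].
case: (set_0Vmem T0) => [e0 | [j jT]].
  have mT : ord_max \in T.
    case/set0Pn: Tn => x xT; case: (ltnP x (size rows)) => hx.
      have : Ordinal hx \in T0 by rewrite inE; congr (_ \in T): xT; apply: val_inj.
      by rewrite e0 inE.
    have -> : ord_max = x by apply: val_inj => /=; have := ltn_ord x; lia.
    done.
  rewrite e0 mT cards0 /NB big_set0 set0U add0n add1n; exact: hr.
have T0n : T0 != set0 by apply/set0Pn; exists j.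
have h0 := hH _ T0 erefl T0n.
case: (ord_max \in T); last by rewrite setU0 addn0.
case: (leqP #|NB rows T0| (#|T0| + dd)) => hc.
  have := hno T0 hc => /subsetPn [x xr xn].
  have sub : x |: NB rows T0 \subset NB rows T0 :|: r.
    by apply/subsetP => y; rewrite !inE => /orP[/eqP->|->]; rewrite ?xr ?orbT.
  have := subset_leq_card sub; rewrite cardsU1 xn => hh.
  have e1 : nat_of_bool true = 1 by []. rewrite e1 in hh *; apply: leq_trans hh; by rewrite addnAC addn1 add1n ltnS.
have := subset_leq_card (subsetUl (NB rows T0) r); lia.
Qed.


Definition Inv (N : {set 'I_m}) (rows : seq {set 'I_m}) :=
  [/\ N \subset V, rowsV rows, Hprop rows &
   (rows = [::] \/ forall i, i \in N -> mcm m rows (Ls i) != (mcm m rows (Bs i)).+1)].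

Lemma run_ok N rows k : umcd_run m A V N rows k -> Inv N rows -> k <= #|V| - dd.
Proof.
elim => [rows0 | N0 rows0 w k0 wN hmin hrun IH] hinv.
  case: hinv => _ hV hH _.
  case: (posnP (size rows0)) => [-> //| hs].
  have hT : [set: 'I_(size rows0)] != set0 by apply/set0Pn; exists (Ordinal hs).
  have := hH _ _ erefl hT; rewrite cardsT card_ord => h.
  have : #|NB rows0 [set: 'I_(size rows0)]| <= #|V|.
    apply: subset_leq_card; apply/bigcupsP => j _; exact: nth_sub.
  lia.
case: hinv => sNV hV hH hsurv.
have wV : w \in V by apply: (subsetP sNV).
apply: IH; split.
- apply/subsetP => i; rewrite inE => /andP[/setD1P[_ iN] _]; exact: (subsetP sNV).
- rewrite /rowsV all_rcons; apply/andP; split=> //.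
  by rewrite subUset sub1set wV subsetIr.
- apply: Hstep => //.
    by rewrite card_rowof ltnS; apply: d_le.
  move=> T0 hc; apply/negP => hs.
  case: hsurv => [e0|hs2].
    subst rows0; have : w \in NB [::] T0.
      by apply: (subsetP hs); rewrite !inE eqxx.
    by case/bigcupP => j; case: j.
  have := key hV hH wV hc hs.
  by move/eqP; rewrite (negbTE (hs2 w wN)).
- by right => i; rewrite inE => /andP[_].
Qed.

Lemma core_bound k : umcd_output m A V k -> k <= beta_MDS m A V.
Proof.
move=> h; apply: (run_ok h); split => //.
  move=> n T hn; subst n => /set0Pn [x _]; by case: x.
by left.
Qed.

End Core.

End Aux.
Unset Implicit Arguments. Set Strict Implicit. Set Printing Implicit Defensive.
Import Aux.

From mathcomp Require Import classical_sets reals.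
Import Order.TTheory GRing.Theory Num.Theory.

Theorem proposition13 (R : realType) (m : nat) (A : 'I_m -> {set 'I_m})
    (hA : forall i : 'I_m, i \notin A i)
    (beta_UMCD : {set 'I_m} -> nat)
    (hU : forall M : {set 'I_m}, umcd_output m A M (beta_UMCD M)) :
  (beta_FP m R beta_UMCD <= beta_FP m R (beta_MDS m A))%R.
Proof.
rewrite /beta_FP.
apply: lb_le_inf.
  exists ((beta_MDS m A [set: 'I_m])%:R)%R, 1%N, (fun _ => [set: 'I_m]), (fun _ => 1%R); split.
  - by move=> j; rewrite ler01 lexx.
  - by move=> i; rewrite big_mkcond /= big_ord1 finset.in_setT.
  - by rewrite big_ord1 mul1r.
move=> x [n [Ms [g [hg hc ->]]]].
apply: (@Order.POrderTheory.le_trans _ _ (\sum_(j < n) g j * (beta_UMCD (Ms j))%:R)%R).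
  apply: ge_inf.
    exists 0%R => y [n' [Ms' [g' [hg' _ ->]]]].
    apply: sumr_ge0 => j _; apply: mulr_ge0; first by case/andP: (hg' j).
    exact: ler0n.
  by exists n, Ms, g; split.
apply: ler_sum => j _; apply: ler_wpM2l; first by case/andP: (hg j).
by rewrite ler_nat; apply: (core_bound hA); apply: hU.
Qed.
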